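(* (A) The Lie algebra $\mathfrak t_{1,n}$ is isomorphic to the Lie algebra with generators $x_i,y_i$ ($i=1,\dots,n$) and relations: $[x_i,y_j]=[x_j,y_i]$ ($i\ne j$); $[x_i,x_j]=[y_i,y_j]=0$ (all $i,j$); $[\sum_j x_j,y_i]=[\sum_j y_j,x_i]=0$ (all $i$); $[x_i,[x_j,y_k]]=[y_i,[y_j,x_k]]=0$ ($i,j,k$ distinct); the isomorphism sends $x_i\mapsto x_i$, $y_i\mapsto y_i$, and $t_{ij}\mapsto[x_i,y_j]$. (B) $\mathfrak t_{1,n}$ is also isomorphic to the Lie algebra with generators $a_i,b_i$ ($i=1,\dots,n$) and relations: $[a_i,a_j]=[b_i,b_j]=0$ (all $i,j$); $[a_1,b_j]=[b_1,a_j]=0$ (all $j$); $[a_j,b_k]=[a_k,b_j]$ (all $j,k$); $[a_i,c_{jk}]=[b_i,c_{jk}]=0$ for $i\le j\le k$, where $c_{jk}:=[b_k,a_k-a_j]$; the isomorphism is given by $a_i=\sum_{j=i}^n x_j$, $b_i=\sum_{j=i}^n y_j$.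
   Context: $\mathfrak t_{1,n}$ is the Lie algebra (over a field of characteristic $0$) with generators $x_i,y_i$ ($1\le i\le n$), $t_{ij}$ ($i\ne j$) and relations $t_{ij}=t_{ji}$, $[t_{ij},t_{ik}+t_{jk}]=0$, $[t_{ij},t_{kl}]=0$, $[x_i,y_j]=t_{ij}$ ($i\ne j$), $[x_i,x_j]=[y_i,y_j]=0$, $[x_i,y_i]=-\sum_{j\ne i}t_{ij}$, $[x_i,t_{jk}]=[y_i,t_{jk}]=0$, $[x_i+x_j,t_{ij}]=[y_i+y_j,t_{ij}]=0$, where $i,j,k,l$ denote distinct indices. *)

(* Defs.v *)
From HB Require Import structures.
From mathcomp Require Import all_boot all_order all_algebra.
Set Implicit Arguments. Unset Strict Implicit. Unset Printing Implicit Defensive.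
Import GRing.Theory.
Local Open Scope ring_scope.

Record lieAlgebra (K : fieldType) := LieAlgebra {
  lie_sort :> lmodType K;
  br : lie_sort -> lie_sort -> lie_sort;
  br_linl : forall (a : K) (x y z : lie_sort), br (a *: x + y) z = a *: br x z + br y z;
  br_linr : forall (a : K) (x y z : lie_sort), br z (a *: x + y) = a *: br z x + br z y;
  br_alt : forall x : lie_sort, br x x = 0;
  br_jacobi : forall x y z : lie_sort,
      br x (br y z) + br y (br z x) + br z (br x y) = 0 }.
Arguments br {K L} x y : rename.

Record lieHom (K : fieldType) (L M : lieAlgebra K) := LieHom {
  lie_fun :> L -> M;
  lie_fun_lin : forall (a : K) (x y : L), lie_fun (a *: x + y) = a *: lie_fun x + lie_fun y;
  lie_fun_br : forall x y : L, lie_fun (br x y) = br (lie_fun x) (lie_fun y) }.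

Section Presentations.
Variables (K : fieldType) (n : nat).

(* Defining relations of t_{1,n} on families x_i, y_i, t_ij (t_ij only used for i != j). *)
Definition t1n_rels (M : lieAlgebra K) (x y : 'I_n -> M) (t : 'I_n -> 'I_n -> M) : Prop :=
  (forall i j, i != j -> t i j = t j i) /\
      (forall i j k, i != j -> i != k -> j != k -> br (t i j) (t i k + t j k) = 0) /\
      (forall i j k l, i != j -> i != k -> i != l -> j != k -> j != l -> k != l ->
         br (t i j) (t k l) = 0) /\
      (forall i j, i != j -> br (x i) (y j) = t i j) /\
      (forall i j, i != j -> br (x i) (x j) = 0 /\ br (y i) (y j) = 0) /\
      (forall i, br (x i) (y i) = - \sum_(j < n | j != i) t i j) /\
      (forall i j k, i != j -> i != k -> j != k ->
         br (x i) (t j k) = 0 /\ br (y i) (t j k) = 0) /\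
      (forall i j, i != j -> br (x i + x j) (t i j) = 0 /\ br (y i + y j) (t i j) = 0).

Definition is_t1n (L : lieAlgebra K) (x y : 'I_n -> L) (t : 'I_n -> 'I_n -> L) : Prop :=
  t1n_rels x y t /\
  forall (M : lieAlgebra K) (x' y' : 'I_n -> M) (t' : 'I_n -> 'I_n -> M),
    t1n_rels x' y' t' ->
    let P := fun f : lieHom L M => (forall i, f (x i) = x' i) /\ (forall i, f (y i) = y' i)
                                /\ (forall i j, i != j -> f (t i j) = t' i j) in
    (exists f, P f) /\ (forall f g, P f -> P g -> f =1 g).

Definition relsA (M : lieAlgebra K) (x y : 'I_n -> M) : Prop :=
  [/\ (forall i j, i != j -> br (x i) (y j) = br (x j) (y i)),
      (forall i j, br (x i) (x j) = 0 /\ br (y i) (y j) = 0),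
      (forall i, br (\sum_(j < n) x j) (y i) = 0 /\ br (\sum_(j < n) y j) (x i) = 0) &
      (forall i j k, i != j -> i != k -> j != k ->
         br (x i) (br (x j) (y k)) = 0 /\ br (y i) (br (y j) (x k)) = 0)].

Definition is_presA (L : lieAlgebra K) (x y : 'I_n -> L) : Prop :=
  relsA x y /\
  forall (M : lieAlgebra K) (x' y' : 'I_n -> M), relsA x' y' ->
    let P := fun f : lieHom L M => (forall i, f (x i) = x' i) /\ (forall i, f (y i) = y' i) in
    (exists f, P f) /\ (forall f g, P f -> P g -> f =1 g).

(* Relations of presentation (B); indices are 0-based, so a_1 is the index of value 0. *)
Definition cB (M : lieAlgebra K) (a b : 'I_n -> M) (j k : 'I_n) : M :=
  br (b k) (a k - a j).

Definition relsB (M : lieAlgebra K) (a b : 'I_n -> M) : Prop :=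
  [/\ (forall i j, br (a i) (a j) = 0 /\ br (b i) (b j) = 0),
      (forall i j, nat_of_ord i = 0%N -> br (a i) (b j) = 0 /\ br (b i) (a j) = 0),
      (forall j k, br (a j) (b k) = br (a k) (b j)) &
      (forall i j k : 'I_n, (i <= j)%N -> (j <= k)%N ->
         br (a i) (cB a b j k) = 0 /\ br (b i) (cB a b j k) = 0)].

Definition is_presB (L : lieAlgebra K) (a b : 'I_n -> L) : Prop :=
  relsB a b /\
  forall (M : lieAlgebra K) (a' b' : 'I_n -> M), relsB a' b' ->
    let P := fun f : lieHom L M => (forall i, f (a i) = a' i) /\ (forall i, f (b i) = b' i) in
    (exists f, P f) /\ (forall f g, P f -> P g -> f =1 g).

End Presentations.

(* Main.v *)
Require Import Defs.
From HB Require Import structures.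
From mathcomp Require Import all_boot all_order all_algebra.
Import GRing.Theory.
Local Open Scope ring_scope.
Set Implicit Arguments. Unset Strict Implicit. Unset Printing Implicit Defensive.

Section LieBasics.
Variables (K : fieldType) (L : lieAlgebra K).
Implicit Types x y z : L.

Lemma br0l z : br 0 z = 0 :> L.
Proof.
have h := br_linl 1 (0 : L) 0 z; rewrite !scale1r addr0 in h.
by apply: (addrI (br 0 z)); rewrite -h addr0.
Qed.
Lemma br0r z : br z 0 = 0 :> L.
Proof.
have h := br_linr 1 (0 : L) 0 z; rewrite !scale1r addr0 in h.
by apply: (addrI (br z 0)); rewrite -h addr0.
Qed.
Lemma brDl x y z : br (x + y) z = br x z + br y z.
Proof. by have := br_linl 1 x y z; rewrite !scale1r. Qed.
Lemma brDr x y z : br z (x + y) = br z x + br z y.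
Proof. by have := br_linr 1 x y z; rewrite !scale1r. Qed.
Lemma brZl a x z : br (a *: x) z = a *: br x z.
Proof. by have := br_linl a x 0 z; rewrite !addr0 br0l addr0. Qed.
Lemma brZr a x z : br z (a *: x) = a *: br z x.
Proof. by have := br_linr a x 0 z; rewrite !addr0 br0r addr0. Qed.
Lemma brNl x z : br (- x) z = - br x z.
Proof. by rewrite -scaleN1r brZl scaleN1r. Qed.
Lemma brNr x z : br z (- x) = - br z x.
Proof. by rewrite -scaleN1r brZr scaleN1r. Qed.
Lemma brBl x y z : br (x - y) z = br x z - br y z.
Proof. by rewrite brDl brNl. Qed.
Lemma brBr x y z : br z (x - y) = br z x - br z y.
Proof. by rewrite brDr brNr. Qed.
Lemma brsuml (I : Type) (r : seq I) (P : pred I) (F : I -> L) z :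
  br (\sum_(i <- r | P i) F i) z = \sum_(i <- r | P i) br (F i) z.
Proof. exact: (big_morph (fun u => br u z) (fun a b => brDl a b z) (br0l z)). Qed.
Lemma brsumr (I : Type) (r : seq I) (P : pred I) (F : I -> L) z :
  br z (\sum_(i <- r | P i) F i) = \sum_(i <- r | P i) br z (F i).
Proof. exact: (big_morph (fun u => br z u) (fun a b => brDr a b z) (br0r z)). Qed.
Lemma br_anti x y : br x y = - br y x.
Proof.
have := br_alt (x + y); rewrite brDl !brDr !br_alt add0r addr0 => /eqP.
by rewrite addr_eq0 => /eqP.
Qed.
Lemma br_jac x y z : br x (br y z) = br (br x y) z + br y (br x z).
Proof.
have := br_jacobi x y z => /eqP; rewrite -addrA addr_eq0 => /eqP ->.
by rewrite (br_anti z (br x y)) (br_anti z x) brNr opprD !opprK addrC.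
Qed.
End LieBasics.
Section Homs.
Variables (K : fieldType) (L M N : lieAlgebra K).

Lemma lh0 (f : lieHom L M) : f 0 = 0.
Proof.
have h := lie_fun_lin f 1 0 0; rewrite !scale1r addr0 in h.
by apply: (addrI (f 0)); rewrite -h addr0.
Qed.
Lemma lhD (f : lieHom L M) x y : f (x + y) = f x + f y.
Proof. by have := lie_fun_lin f 1 x y; rewrite !scale1r. Qed.
Lemma lhZ (f : lieHom L M) a x : f (a *: x) = a *: f x.
Proof. by have := lie_fun_lin f a x 0; rewrite !addr0 lh0 addr0. Qed.
Lemma lhN (f : lieHom L M) x : f (- x) = - f x.
Proof. by rewrite -scaleN1r lhZ scaleN1r. Qed.
Lemma lhB (f : lieHom L M) x y : f (x - y) = f x - f y.
Proof. by rewrite lhD lhN. Qed.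
Lemma lhsum (f : lieHom L M) (I : Type) (r : seq I) (P : pred I) (F : I -> L) :
  f (\sum_(i <- r | P i) F i) = \sum_(i <- r | P i) f (F i).
Proof. exact: (big_morph f (lhD f) (lh0 f)). Qed.

Definition comp_hom (f : lieHom L M) (g : lieHom M N) : lieHom L N.
Proof.
refine (@LieHom K L N (fun x => g (f x)) _ _).
- by move=> a x y; rewrite !lie_fun_lin.
- by move=> x y; rewrite !lie_fun_br.
Defined.
Definition id_hom : lieHom L L.
Proof. by refine (@LieHom K L L (fun x => x) _ _). Defined.
End Homs.
Section Rels.
Variables (K : fieldType) (n : nat) (M : lieAlgebra K).

Lemma brlj (x y z : M) : br (br x y) z = br x (br y z) - br y (br x z).
Proof. by rewrite br_jac addrK. Qed.

Lemma t1n_A (x y : 'I_n -> M) t : t1n_rels x y t -> relsA x y.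
Proof.
case=> [tsym [_ [_ [xyt [xx [xyi [xt _]]]]]]].
have sumt i : \sum_(j < n | j != i) br (x j) (y i) = \sum_(j < n | j != i) t i j.
  by apply: eq_bigr => j ne; rewrite xyt // tsym.
have sumt' i : \sum_(j < n | j != i) br (x i) (y j) = \sum_(j < n | j != i) t i j.
  by apply: eq_bigr => j ne; rewrite xyt // eq_sym.
split.
- by move=> i j ne; rewrite xyt // xyt 1?eq_sym // tsym.
- move=> i j; case: (eqVneq i j) => [->|ne]; first by rewrite !br_alt.
  exact: xx.
- move=> i; split.
    by rewrite brsuml (bigD1 i) //= xyi sumt addNr.
  rewrite brsuml (eq_bigr (fun j => - br (x i) (y j))); last by move=> j _; rewrite br_anti.
  by rewrite sumrN (bigD1 i) //= xyi sumt' addNr oppr0.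
- move=> i j k ij ik jk; split; first by rewrite xyt //; case: (xt i j k ij ik jk).
  rewrite (br_anti (y j)) brNr xyt 1?eq_sym //; case: (xt i k j ik ij _) => [|_ ->]; last by rewrite oppr0.
  by rewrite eq_sym.
Qed.

Lemma A_t1n (x y : 'I_n -> M) : relsA x y -> t1n_rels x y (fun i j => br (x i) (y j)).
Proof.
case=> sym xxyy sumr dist.
have xx i j : br (x i) (x j) = 0 by case: (xxyy i j).
have yy i j : br (y i) (y j) = 0 by case: (xxyy i j).
have dx i j k : i != j -> i != k -> j != k -> br (x i) (br (x j) (y k)) = 0.
  by move=> ij ik jk; case: (dist i j k ij ik jk).
have dy i j k : i != j -> i != k -> j != k -> br (y i) (br (x k) (y j)) = 0.
  move=> ij ik jk; case: (dist i j k ij ik jk) => _.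
  by rewrite (br_anti (y j)) brNr => /eqP; rewrite oppr_eq0 => /eqP.
have kx i j : i != j -> br (x i) (br (x i) (y j)) + br (x j) (br (x i) (y j)) = 0.
  move=> ij; case: (sumr j) => h _.
  have := congr1 (br (x i)) h; rewrite br0r brsuml brsumr (bigD1 i) //=.
  rewrite (bigD1 j) /= ?(eq_sym j) // big1 ?addr0; last first.
    by move=> k /andP [ki kj]; apply: dx; rewrite // eq_sym.
  by rewrite [br (x i) (br (x j) _)]br_jac xx br0l add0r.
have ky i j : i != j -> br (y i) (br (x i) (y j)) + br (y j) (br (x i) (y j)) = 0.
  move=> ij; case: (sumr i) => _ h.
  have := congr1 (br (y j)) h; rewrite br0r brsuml brsumr (bigD1 i) //=.
  rewrite (bigD1 j) /= ?(eq_sym j) // big1 ?addr0; last first.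
    move=> k /andP [ki kj]; rewrite (br_anti (y k)) brNr dy ?oppr0 //.
    by rewrite eq_sym. by rewrite eq_sym.
  rewrite [br (y j) (br (y i) _)]br_jac yy br0l add0r (br_anti (y j) (x i)) !brNr -opprD => /eqP.
  by rewrite oppr_eq0 addrC => /eqP.
have yt i j k : i != j -> i != k -> j != k -> br (y j) (br (x i) (y k)) = 0.
  move=> ij ik jk; rewrite (sym i k ik); apply: dy => //; by rewrite eq_sym.
split; first by move=> i j ne; rewrite sym.
split.
  move=> i j k ij ik jk.
  rewrite brDr !brlj (yt i j k) // br0r (dx i j k) // br0r subr0 sub0r.
  have e1 : br (x i) (br (x i) (y k)) = - br (x k) (br (x i) (y k)).
    by apply/eqP; rewrite -addr_eq0 kx.
  have e2 : br (y j) (br (x j) (y k)) = - br (y k) (br (x k) (y j)).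
    by rewrite (sym j k jk); apply/eqP; rewrite -addr_eq0 addrC ky // eq_sym.
  rewrite e1 e2 !brNr opprK.
  have f1 : br (y j) (br (x k) (br (x i) (y k))) = br (br (x i) (y k)) (br (x k) (y j)).
    rewrite br_jac (yt i j k) // br0r addr0 (br_anti (y j)) brNl.
    by rewrite (br_anti (br (x k) (y j))) opprK.
  have f2 : br (x i) (br (y k) (br (x k) (y j))) = br (br (x i) (y k)) (br (x k) (y j)).
    by rewrite br_jac (dx i k j) // ?br0r ?addr0 // eq_sym.
  by rewrite f1 f2 subrr.
split.
  move=> i j k l ij ik il jk jl kl.
  by rewrite brlj (dx i k l) // br0r (yt k j l) ?br0r ?subrr // eq_sym.
split; first by move=> i j _.
split; first by move=> i j ne; split.
split.
  move=> i; case: (sumr i) => _ h.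
  have : \sum_(j < n) br (x i) (y j) = 0.
    transitivity (- br (\sum_(j < n) y j) (x i)); last by rewrite h oppr0.
    rewrite brsuml -sumrN.
    by apply: eq_bigr => j _; rewrite br_anti.
  by rewrite (bigD1 i) //= => /eqP; rewrite addr_eq0 => /eqP.
split.
  move=> i j k ij ik jk; split; first exact: dx.
  by apply: (yt j i k); rewrite // eq_sym.
move=> i j ij; split.
  by rewrite brDl kx.
by rewrite brDl ky.
Qed.
End Rels.
From mathcomp Require Import zify.

Lemma allperm (M : zmodType) (F : nat -> nat -> nat -> M) :
  (forall p q r, (p < q)%N -> (q < r)%N -> F p q r = 0) ->
  (forall p q r, F p q r = F q p r) -> (forall p q r, F p q r = F p r q) ->
  forall p q r, p != q -> p != r -> q != r -> F p q r = 0.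
Proof.
move=> srt S12 S23.
have l2 p q r : (p < q)%N -> q != r -> p != r -> F p q r = 0.
  move=> pq qr pr; case: (ltngtP q r) => [qr'|rq|e]; first exact: srt.
    case: (ltngtP p r) => [pr'|rp|e]; first by rewrite S23 srt.
      by rewrite S23 S12 srt.
    by rewrite e eqxx in pr.
  by rewrite e eqxx in qr.
move=> p q r pq pr qr; case: (ltngtP p q) => [pq'|qp|e]; first exact: l2.
  by rewrite S12 l2 // eq_sym.
by rewrite e eqxx in pq.
Qed.

Section RelsAB.
Variables (K : fieldType) (n : nat) (M : lieAlgebra K).

Lemma ne_lt (r p : 'I_n) : (r < p)%N -> r != p.
Proof. by move=> h; apply/eqP => e; rewrite e ltnn in h. Qed.

Lemma relsA_B (x y : 'I_n -> M) : relsA x y ->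
  relsB (fun i : 'I_n => \sum_(j < n | (i <= j)%N) x j) (fun i : 'I_n => \sum_(j < n | (i <= j)%N) y j).
Proof.
case=> sym xxyy sumr dist.
have xx i j : br (x i) (x j) = 0 by case: (xxyy i j).
have yy i j : br (y i) (y j) = 0 by case: (xxyy i j).
have symall p q : br (x p) (y q) = br (x q) (y p).
  by case: (eqVneq p q) => [->|]; last exact: sym.
have cX q p : br (\sum_(j < n) x j) (br (y q) (x p)) = 0.
  rewrite br_jac (sumr q).1 br0l add0r brsuml big1 ?br0r // => r _; exact: xx.
have cY q p : br (\sum_(j < n) y j) (br (y q) (x p)) = 0.
  rewrite br_jac (sumr p).2 br0r addr0 brsuml big1 ?br0l // => r _; exact: yy.
have splitI (F : 'I_n -> M) (i : nat) :
    \sum_(r < n | (i <= r)%N) F r = \sum_(r < n) F r - \sum_(r < n | ~~ (i <= r)%N) F r.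
  by rewrite (bigID (fun r : 'I_n => (i <= r)%N) xpredT) /= addrK.
have splitJ (F : 'I_n -> M) (j k : nat) : (j <= k)%N ->
    \sum_(p < n | (j <= p)%N) F p =
    \sum_(p < n | (k <= p)%N) F p + \sum_(p < n | (j <= p)%N && ~~ (k <= p)%N) F p.
  move=> jk; rewrite (bigID (fun p : 'I_n => (k <= p)%N)) /=; congr (_ + _).
  by apply: eq_bigl => p; rewrite andb_idl // => h; exact: leq_trans jk h.
split.
- move=> i j; split.
    by rewrite brsuml big1 // => p _; rewrite brsumr big1 // => q _; exact: xx.
  by rewrite brsuml big1 // => p _; rewrite brsumr big1 // => q _; exact: yy.
- move=> i j hi.
  have e (F : 'I_n -> M) : \sum_(k < n | (i <= k)%N) F k = \sum_(k < n) F k.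
    by apply: eq_bigl => k; rewrite hi.
  rewrite !e; split.
    by rewrite brsumr big1 // => k _; exact: (sumr k).1.
  by rewrite brsumr big1 // => k _; exact: (sumr k).2.
- move=> j k.
  rewrite brsuml (eq_bigr (fun p => \sum_(q < n | (k <= q)%N) br (x p) (y q))); last first.
    by move=> p _; rewrite brsumr.
  rewrite [RHS]brsuml [RHS](eq_bigr (fun p => \sum_(q < n | (j <= q)%N) br (x p) (y q))); last first.
    by move=> p _; rewrite brsumr.
  rewrite exchange_big; apply: eq_bigr => q _; apply: eq_bigr => p _; exact: symall.
- move=> i j k hij hjk; rewrite /cB /= (splitJ x j k hjk) opprD addrA subrr add0r.
  have gen (z : M) : (forall q p : 'I_n, (k <= q)%N -> (j <= p)%N -> (p < k)%N ->
                       br z (br (y q) (x p)) = 0) ->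
       br z (br (\sum_(i0 < n | (k <= i0)%N) y i0)
              (- \sum_(p < n | (j <= p)%N && ~~ (k <= p)%N) x p)) = 0.
    move=> H; rewrite brNr brsuml brNr brsumr big1 ?oppr0 // => q hq.
    rewrite !brsumr big1 // => p /andP [hp1 hp2]; apply: H => //.
    by rewrite ltnNge.
  split; apply: gen => q p hq hp1 hp2; rewrite splitI brBl ?cX ?cY sub0r brsuml big1 ?oppr0 //;
    move=> r hr; rewrite -ltnNge in hr.
    have d1 : r != p by apply: ne_lt; lia.
    have d2 : r != q by apply: ne_lt; lia.
    have d3 : p != q by apply: ne_lt; lia.
    by rewrite (br_anti (y q)) brNr (proj1 (dist r p q d1 d2 d3)) oppr0.
  have d1 : r != q by apply: ne_lt; lia.
  have d2 : r != p by apply: ne_lt; lia.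
  have d3 : q != p by rewrite eq_sym; apply: ne_lt; lia.
  exact: (proj2 (dist r q p d1 d2 d3)).
Qed.
End RelsAB.
Section RelsBA.
Variables (K : fieldType) (n : nat) (M : lieAlgebra K).

Definition ae (a : 'I_n -> M) (k : nat) : M := if insub k is Some i then a i else 0.

Lemma aeO a k (h : (k < n)%N) : ae a k = a (Ordinal h).
Proof. by rewrite /ae insubT. Qed.
Lemma aeN a k : (n <= k)%N -> ae a k = 0.
Proof. by move=> h; rewrite /ae insubF // ltnNge h. Qed.
Lemma ae_ord a (i : 'I_n) : ae a i = a i.
Proof. by rewrite (aeO a (ltn_ord i)); congr a; apply: val_inj. Qed.

Variables (a b : 'I_n -> M).
Hypothesis HB : relsB a b.

Let Xn k := ae a k - ae a k.+1.
Let Yn k := ae b k - ae b k.+1.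

Lemma E1a p q : br (ae a p) (ae a q) = 0.
Proof.
case: HB => aabb _ _ _.
by rewrite /ae; case: insub => [i|]; case: insub => [j|]; rewrite ?br0l ?br0r //; case: (aabb i j).
Qed.
Lemma E1b p q : br (ae b p) (ae b q) = 0.
Proof.
case: HB => aabb _ _ _.
by rewrite /ae; case: insub => [i|]; case: insub => [j|]; rewrite ?br0l ?br0r //; case: (aabb i j).
Qed.
Lemma E2 p q : br (ae a p) (ae b q) = br (ae a q) (ae b p).
Proof.
case: HB => _ _ abs _.
by rewrite /ae; case: insub => [i|]; case: insub => [j|]; rewrite ?br0l ?br0r.
Qed.

Lemma E3 (c : 'I_n -> M) :
  (forall i j k : 'I_n, (i <= j)%N -> (j <= k)%N -> br (c i) (cB a b j k) = 0) ->
  forall s j k, (s <= j)%N -> (j <= k)%N ->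
  br (ae c s) (br (ae b k) (ae a j)) = br (ae c s) (br (ae b k) (ae a k)).
Proof.
move=> hc s j k hsj hjk; case: (ltnP k n) => hk; last by rewrite (aeN b hk) !br0l.
have hj : (j < n)%N by apply: leq_ltn_trans hk.
have hs : (s < n)%N by apply: leq_ltn_trans hj.
rewrite (aeO b hk) (aeO a hk) (aeO a hj) (aeO c hs).
have := hc (Ordinal hs) (Ordinal hj) (Ordinal hk) hsj hjk.
by rewrite /cB !brBr => /eqP; rewrite subr_eq0 => /eqP.
Qed.

Lemma kill (c : 'I_n -> M) :
  (forall i j k : 'I_n, (i <= j)%N -> (j <= k)%N -> br (c i) (cB a b j k) = 0) ->
  forall s q r, (s <= q)%N -> (q < r)%N -> br (ae c s) (br (Xn q) (Yn r)) = 0.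
Proof.
move=> hc s q r hsq hqr; rewrite /Xn /Yn !brBl !brBr.
rewrite !(br_anti (ae a _) (ae b _)) !brNr.
rewrite (E3 hc (j:=q) (k:=r)) ?(E3 hc (j:=q.+1) (k:=r)) ?(E3 hc (j:=q) (k:=r.+1))
  ?(E3 hc (j:=q.+1) (k:=r.+1)) //; try lia.
by rewrite subrr.
Qed.

Lemma XYsym p q : br (Xn p) (Yn q) = br (Xn q) (Yn p).
Proof.
rewrite /Xn /Yn !brBl !brBr (E2 p q) (E2 p q.+1) (E2 p.+1 q) (E2 p.+1 q.+1).
rewrite !opprB addrACA [in RHS]addrACA; congr (_ + _); exact: addrC.
Qed.
Lemma XX p q : br (Xn p) (Xn q) = 0.
Proof. by rewrite /Xn !brBl !brBr !E1a !subrr. Qed.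
Lemma YY p q : br (Yn p) (Yn q) = 0.
Proof. by rewrite /Yn !brBl !brBr !E1b !subrr. Qed.

Lemma relsB_A : relsA (fun i : 'I_n => Xn i) (fun i : 'I_n => Yn i).
Proof.
have HB' := HB; case: HB' => _ ab0 _ cc.
have tel (c : 'I_n -> M) : \sum_(j < n) (ae c j - ae c j.+1) = ae c 0.
  rewrite -(big_mkord xpredT (fun j => ae c j - ae c j.+1)).
  have -> : \sum_(0 <= j < n) (ae c j - ae c j.+1) = - \sum_(0 <= j < n) (ae c j.+1 - ae c j).
    by rewrite -sumrN; apply: eq_bigr => j _; rewrite opprB.
  by rewrite telescope_sumr // aeN // sub0r opprK.
split.
- by move=> i j _; apply: XYsym.
- by move=> i j; rewrite XX YY.
- move=> i; have h0 : (0 < n)%N by apply: leq_ltn_trans (ltn_ord i).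
  rewrite /Xn /Yn !tel (aeO a h0) (aeO b h0).
  have z1 k : br (a (Ordinal h0)) (ae b k) = 0.
    by rewrite /ae; case: insub => [j|]; rewrite ?br0r //; case: (ab0 (Ordinal h0) j).
  have z2 k : br (b (Ordinal h0)) (ae a k) = 0.
    by rewrite /ae; case: insub => [j|]; rewrite ?br0r //; case: (ab0 (Ordinal h0) j).
  by rewrite !brBr !z1 !z2 !subrr.
- move=> i j k ij ik jk; split.
    apply: (allperm (F := fun p q r => br (Xn p) (br (Xn q) (Yn r)))) => //.
    + move=> p q r pq qr; rewrite {1}/Xn brBl (kill (c := a)) ?(kill (c := a)) ?subrr //; try lia.
        by move=> i0 j0 k0 h1 h2; case: (cc i0 j0 k0 h1 h2).
      by move=> i0 j0 k0 h1 h2; case: (cc i0 j0 k0 h1 h2).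
    + by move=> p q r; rewrite br_jac XX br0l add0r.
    + by move=> p q r; rewrite XYsym.
  apply: (allperm (F := fun p q r => br (Yn p) (br (Yn q) (Xn r)))) => //.
  + move=> p q r pq qr; rewrite (br_anti (Yn q)) XYsym brNr.
    rewrite {1}/Yn brBl (kill (c := b)) ?(kill (c := b)) ?subrr ?oppr0 //; try lia.
      by move=> i0 j0 k0 h1 h2; case: (cc i0 j0 k0 h1 h2).
    by move=> i0 j0 k0 h1 h2; case: (cc i0 j0 k0 h1 h2).
  + by move=> p q r; rewrite br_jac YY br0l add0r.
  + move=> p q r; congr (br _ _).
    by rewrite (br_anti (Yn q)) (br_anti (Yn r)) XYsym.
Qed.
End RelsBA.
Section Final.
Variables (K : fieldType) (n : nat).

Lemma TelI (M : lieAlgebra K) (c : 'I_n -> M) (i : 'I_n) :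
  \sum_(j < n | (i <= j)%N) (ae c j - ae c j.+1) = c i.
Proof.
rewrite (eq_bigl (fun j : 'I_n => true && (i <= j)%N)) //.
rewrite -(big_geq_mkord i n xpredT (fun j => ae c j - ae c j.+1)).
have -> : \sum_(i <= j < n | true) (ae c j - ae c j.+1) = - \sum_(i <= j < n) (ae c j.+1 - ae c j).
  by rewrite -sumrN; apply: eq_bigr => j _; rewrite opprB.
by rewrite telescope_sumr 1?ltnW // aeN // sub0r opprK ae_ord.
Qed.

Lemma hom_ae (B T : lieAlgebra K) (g : lieHom B T) (a : 'I_n -> B) (x : 'I_n -> T) :
  (forall i, g (a i) = \sum_(j < n | (i <= j)%N) x j) ->
  forall k, g (ae a k) = \sum_(j < n | (k <= j)%N) x j.
Proof.
move=> ga k; case: (ltnP k n) => hk; first by rewrite (aeO a hk) ga.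
rewrite aeN // lh0 big_pred0 // => j; apply/negbTE; rewrite -ltnNge.
exact: leq_trans (ltn_ord j) hk.
Qed.

Lemma sum_diff (T : lieAlgebra K) (x : 'I_n -> T) (i : 'I_n) :
  \sum_(j < n | (i <= j)%N) x j - \sum_(j < n | (i.+1 <= j)%N) x j = x i.
Proof.
rewrite (bigD1 i) //= -addrA addrC.
have -> : \sum_(j < n | (i <= j)%N && (j != i)) x j = \sum_(j < n | (i.+1 <= j)%N) x j.
  apply: eq_bigl => j; rewrite ltn_neqAle andbC -val_eqE /= eq_sym //.
by rewrite subrr add0r.
Qed.
End Final.

Theorem mainTheorem4 (K : fieldType) (n : nat) (charK0 : [pchar K] =i pred0)
  (T : lieAlgebra K) (x y : 'I_n -> T) (t : 'I_n -> 'I_n -> T)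
  (HT : is_t1n x y t) :
  (forall (A : lieAlgebra K) (xA yA : 'I_n -> A), is_presA xA yA ->
     exists f : lieHom T A, bijective f /\
       (forall i, f (x i) = xA i) /\ (forall i, f (y i) = yA i) /\
       (forall i j, i != j -> f (t i j) = br (xA i) (yA j))) /\
  (forall (B : lieAlgebra K) (a b : 'I_n -> B), is_presB a b ->
     exists g : lieHom B T, bijective g /\
       (forall i, g (a i) = \sum_(j < n | (i <= j)%N) x j) /\
       (forall i, g (b i) = \sum_(j < n | (i <= j)%N) y j)).
Proof.
have [HTr HTu] := HT.
have HAx := t1n_A HTr.
have xyt : forall i j, i != j -> br (x i) (y j) = t i j.
  by case: HTr => [_ [_ [_ [h _]]]].
have [_ uT] := HTu T x y t HTr.
split.
- move=> A xA yA [HAr HAu].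
  have Ht' := A_t1n HAr.
  have [[f [fx [fy ft]]] _] := HTu A xA yA _ Ht'.
  have [[g [gx gy]] _] := HAu T x y HAx.
  have [_ uA] := HAu A xA yA HAr.
  exists f; split; last by [].
  exists g.
  + move=> u; apply: (uT (comp_hom f g) (id_hom T)); last by [].
    split; first by move=> i /=; rewrite fx gx.
    split; first by move=> i /=; rewrite fy gy.
    by move=> i j ij /=; rewrite ft // lie_fun_br gx gy xyt.
  + move=> u; apply: (uA (comp_hom g f) (id_hom A)); last by [].
    split; first by move=> i /=; rewrite gx fx.
    by move=> i /=; rewrite gy fy.
- move=> B a b [HBr HBu].
  have HB' := relsA_B HAx.
  have [[g [ga gb]] _] := HBu T _ _ HB'.
  have HA' := relsB_A HBr.
  have Ht' := A_t1n HA'.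
  have [[h [hx [hy ht]]] _] := HTu B _ _ _ Ht'.
  have [_ uB] := HBu B a b HBr.
  exists g; split; last by [].
  exists h.
  + move=> u; apply: (uB (comp_hom g h) (id_hom B)); last by [].
    split; first by move=> i /=; rewrite ga lhsum (eq_bigr _ (fun j _ => hx j)) TelI.
    by move=> i /=; rewrite gb lhsum (eq_bigr _ (fun j _ => hy j)) TelI.
  + move=> u; apply: (uT (comp_hom h g) (id_hom T)); last by [].
    split; first by move=> i /=; rewrite hx lhB !(hom_ae ga) sum_diff.
    split; first by move=> i /=; rewrite hy lhB !(hom_ae gb) sum_diff.
    move=> i j ij /=; rewrite ht // lie_fun_br !lhB !(hom_ae ga) !(hom_ae gb) !sum_diff.
    exact: xyt.
Qed.
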